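(* If $m$ and $n$ are non-negative integers, then $$\sum_{k = 1}^n \sum_{j = 0}^{k - 1} \frac{( n - j)!}{k - j}\binom{n}{j}\left\{ {m \atop n - j} \right\} = n^m H_n - \sum_{k = 1}^n \frac{( n - k)^m }{k} .$$
   Context: $\left\{ {m \atop p} \right\}$ denotes the Stirling number of the second kind; $H_n=\sum_{i=1}^n\frac1i$; the convention $0^0=1$ is used. Empty sums are zero. *)

(* Defs.v *)
From mathcomp Require Import all_boot all_order all_algebra.
Set Implicit Arguments. Unset Strict Implicit. Unset Printing Implicit Defensive.
Import GRing.Theory Num.Theory.

Fixpoint stirling2 (m p : nat) : nat :=
  match m, p with
  | 0, 0 => 1
  | 0, _.+1 => 0
  | _.+1, 0 => 0
  | m'.+1, p'.+1 => p'.+1 * stirling2 m' p'.+1 + stirling2 m' p'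
  end.

Local Open Scope ring_scope.

Definition harmonic (n : nat) : rat := \sum_(1 <= i < n.+1) (i%:R)^-1.

(* Main.v *)
Require Import Defs.
From mathcomp Require Import all_boot all_order all_algebra.
From mathcomp Require Import ring lra.
Import GRing.Theory Num.Theory.

Lemma stirling0 m p : m < p -> stirling2 m p = 0.
Proof.
elim: m p => [|m IH] [|p] //= H.
by rewrite !IH ?muln0 // ltnW.
Qed.

Lemma gstep x p : x * (p`! * 'C(x, p)) = p.+1`! * 'C(x, p.+1) + p * (p`! * 'C(x, p)).
Proof.
rewrite factS -mulnA (mulnCA p.+1) mul_bin_left.
case: (leqP p x) => H.
  by rewrite [in RHS]mulnCA -mulnDl subnK.
by rewrite bin_small // !muln0.
Qed.

Lemma expand x m N : m < N ->
  x ^ m = \sum_(0 <= p < N) stirling2 m p * (p`! * 'C(x, p)).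
Proof.
elim: m N => [|m IH] [|N] H //.
  rewrite big_nat_recl //= bin0 expn0 big1_seq //.
rewrite expnS (IH N) // big_distrr.
case: N H => [//|N] H.
rewrite [RHS]big_nat_recl // mul0n add0n.
under eq_big_nat => i _ do rewrite /= (mulnCA x) gstep mulnDr.
rewrite big_split /=.
under [X in _ = X]eq_big_nat => i _ do rewrite [stirling2 _ _]/= mulnDl.
rewrite big_split /= addnC; congr (_ + _).
rewrite big_nat_recl // mul0n muln0 add0n.
rewrite [in RHS]big_nat_recr //= (@stirling0 m N.+1) // muln0 mul0n addn0.
by apply: eq_big_nat => i _; rewrite mulnCA !mulnA.
Qed.

Local Open Scope ring_scope.

Lemma harmS n : harmonic n.+1 = harmonic n + (n.+1)%:R^-1.
Proof. by rewrite /harmonic big_nat_recr. Qed.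

Lemma harm0 : harmonic 0 = 0.
Proof. by rewrite /harmonic big_geq. Qed.

Lemma keyG n p : \sum_(1 <= k < n.+1) ('C(n - k, p))%:R / k%:R
   = ('C(n, p))%:R * (harmonic n - harmonic p) :> rat.
Proof.
elim: n p => [|n IH] [|p].
- by rewrite big_geq // harm0 subrr mulr0.
- by rewrite big_geq // bin0n mul0r.
- rewrite bin0 mul1r harm0 subr0 /harmonic.
  by apply: eq_big_nat => i _; rewrite bin0 mul1r.
- rewrite big_nat_recr //= subnn bin0n mul0r addr0.
  rewrite (eq_big_nat _ _ (F2 := fun k => ('C(n - k, p.+1))%:R / k%:R + ('C(n - k, p))%:R / k%:R)); last first.
    by move=> i /andP[_ Hi]; rewrite subSn // binS natrD mulrDl.
  rewrite big_split /= !IH !harmS binS natrD.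
  have e : ('C(n.+1, p.+1))%:R / (n.+1)%:R = ('C(n, p))%:R / (p.+1)%:R :> rat.
    apply/eqP; rewrite eqr_div ?pnatr_eq0 // -!natrM; apply/eqP; congr (_%:R).
    by rewrite mulnC -mul_bin_diag mulnC.
  move: e; rewrite binS natrD => e.
  set a := ('C(n, p.+1))%:R in e *; set b := ('C(n, p))%:R in e *.
  rewrite [RHS](_ : _ = (a + b) * (harmonic n - (harmonic p + (p.+1)%:R^-1)) + (a + b) / (n.+1)%:R); last by ring.
  rewrite e; ring.
Qed.

Lemma tri (a : nat -> rat) N :
  \sum_(1 <= k < N.+1) \sum_(0 <= j < k) a j / (k - j)%:R
  = \sum_(0 <= j < N) a j * harmonic (N - j).
Proof.
elim: N => [|N IH]; first by rewrite !big_geq.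
rewrite big_nat_recr //= IH.
rewrite [RHS](eq_big_nat _ _ (F2 := fun j => a j * harmonic (N - j) + a j / (N.+1 - j)%:R)); last first.
  by move=> i /andP[_ Hi]; rewrite subSn // harmS mulrDr.
rewrite big_split /= [in RHS]big_nat_recr //= subnn harm0 mulr0 addr0.
by [].
Qed.

Theorem proposition16 (m n : nat) :
  \sum_(1 <= k < n.+1) \sum_(0 <= j < k)
     (((n - j)`! * 'C(n, j) * stirling2 m (n - j))%:R / (k - j)%:R : rat)
  = (n ^ m)%:R * harmonic n - \sum_(1 <= k < n.+1) ((n - k) ^ m)%:R / k%:R.
Proof.
rewrite (tri (fun j => ((n - j)`! * 'C(n, j) * stirling2 m (n - j))%:R)).
have HN : (m < (m + n).+1)%N by rewrite ltnS leq_addr.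
have L : \sum_(0 <= j < n) ((n - j)`! * 'C(n, j) * stirling2 m (n - j))%:R * harmonic (n - j)
   = \sum_(0 <= p < (m + n).+1) (stirling2 m p * (p`! * 'C(n, p)))%:R * harmonic p :> rat.
  transitivity (\sum_(0 <= j < n.+1) ((n - j)`! * 'C(n, j) * stirling2 m (n - j))%:R * harmonic (n - j) : rat).
    by rewrite [RHS]big_nat_recr //= subnn harm0 mulr0 addr0.
  rewrite big_nat_rev /=.
  rewrite (eq_big_nat _ _ (F2 := fun p => (stirling2 m p * (p`! * 'C(n, p)))%:R * harmonic p)); last first.
    by move=> i /andP[_ Hi]; rewrite add0n subSS subKn // bin_sub // mulnC.
  rewrite [RHS](big_cat_nat _ (n := n.+1)) //=; last by rewrite ltnS leq_addl.
  rewrite [X in _ = _ + X]big1_seq ?addr0 // => i.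
  rewrite mem_index_iota => /andP[_ H]; case/andP: H => Hi _.
  by rewrite bin_small // !muln0 mul0r.
rewrite L (@expand n m _ HN) natr_sum mulr_suml.
under [X in _ = _ - X]eq_big_nat => k _ do rewrite (@expand (n - k) m _ HN) natr_sum mulr_suml.
rewrite exchange_big_nat /= -sumrB.
apply: eq_big_nat => p _.
under eq_big_nat => k _ do rewrite natrM -mulrA.
rewrite -mulr_sumr.
under eq_big_nat => k _ do rewrite natrM -mulrA.
rewrite -mulr_sumr keyG !natrM; ring.
Qed.
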